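(* Let $\mathcal{G}=(V,E)$ be an $m$-uniform connected hypergraph with $m>2$ on $n$ vertices, with maximum degree $d_{\max}$ and minimum degree $d_{\min}$. Then $$\lambda_n(L_{\mathcal{G}})\le\frac{2d_{\max}(m-1)-1+\sqrt{4(m-1)^2d_{\max}^2|E|^2-2d_{\min}(m-1)+1}}{2(m-1)}.$$
   Context: A hypergraph $\mathcal{G}=(V,E)$ has a finite vertex set $V$ and a set $E$ of subsets of $V$ (edges); it is $m$-uniform if every edge has exactly $m$ vertices. The degree $d_i$ is the number of edges containing $i$, and for distinct $i,j$ the codegree $d_{ij}$ is the number of edges containing both. The Laplacian $L_{\mathcal{G}}$ has $(L_{\mathcal{G}})_{ii}=d_i$ and $(L_{\mathcal{G}})_{ij}=-d_{ij}/(m-1)$ for $i\ne j$; $\lambda_n(L_{\mathcal{G}})$ is its largest eigenvalue. *)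

(* Defs.v *)
From HB Require Import structures.
From mathcomp Require Import all_boot all_order all_algebra.
Set Implicit Arguments. Unset Strict Implicit. Unset Printing Implicit Defensive.
Import Order.TTheory GRing.Theory Num.Theory.
Local Open Scope ring_scope.

Definition uniform (n m : nat) (E : {set {set 'I_n}}) : Prop :=
  forall e, e \in E -> #|e| = m.

Definition hdeg (n : nat) (E : {set {set 'I_n}}) (i : 'I_n) : nat :=
  #|[set e in E | i \in e]|.

Definition hcodeg (n : nat) (E : {set {set 'I_n}}) (i j : 'I_n) : nat :=
  #|[set e in E | (i \in e) && (j \in e)]|.

Definition dmax (n : nat) (E : {set {set 'I_n}}) : nat :=
  \max_(i : 'I_n) hdeg E i.

(* minimum degree (the default dmax is only used when n = 0) *)
Definition dmin (n : nat) (E : {set {set 'I_n}}) : nat :=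
  \big[minn/dmax E]_(i : 'I_n) hdeg E i.

Definition hadj (n : nat) (E : {set {set 'I_n}}) : rel 'I_n :=
  fun u v => [exists e in E, (u \in e) && (v \in e)].

Definition hconnected (n : nat) (E : {set {set 'I_n}}) : Prop :=
  forall u v : 'I_n, connect (hadj E) u v.

Definition hlaplacian (R : fieldType) (n m : nat) (E : {set {set 'I_n}})
  : 'M[R]_n :=
  \matrix_(i, j) (if i == j then (hdeg E i)%:R
                  else - ((hcodeg E i j)%:R / (m.-1)%:R)).

(* Main.v *)
Require Import Defs.
From HB Require Import structures.
From mathcomp Require Import all_boot all_order all_algebra.
From mathcomp Require Import ring lra zify.
Import Order.TTheory GRing.Theory Num.Theory.
Local Open Scope ring_scope.

Lemma card_sum (T : finType) (A : {set T}) (P : pred T) :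
  #|[set e in A | P e]| = (\sum_(e in A) (P e : nat))%N.
Proof.
rewrite -sum1_card big_mkcond [RHS]big_mkcond /=.
by apply: eq_bigr => i _; rewrite !inE; case: (i \in A); case: (P i).
Qed.

Lemma codeg_sum n m (E : {set {set 'I_n}}) p : uniform m E ->
  (\sum_(i : 'I_n) hcodeg E i p = m * hdeg E p)%N.
Proof.
move=> hu.
rewrite /hcodeg /hdeg card_sum big_distrr /=.
under eq_bigr do rewrite card_sum.
rewrite exchange_big /=.
apply: eq_bigr => e eE.
under eq_bigr do rewrite andbC -mulnb.
rewrite -big_distrr /= mulnC -(hu e eE) -sum1_card; congr (_ * _)%N.
by rewrite [RHS]big_mkcond /=; apply: eq_bigr => i _; case: (i \in e).
Qed.

Lemma codeg_sum' n m (E : {set {set 'I_n}}) p : uniform m E ->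
  (\sum_(i | i != p) hcodeg E i p = m.-1 * hdeg E p)%N.
Proof.
move=> hu; have := @codeg_sum n m E p hu.
rewrite (bigD1 p) //= /hcodeg /hdeg.
have -> : [set e in E | (p \in e) && (p \in e)] = [set e in E | p \in e].
  by apply/setP => e; rewrite !inE andbb.
move=> h. rewrite -subn1 mulnBl mul1n -h addKn//.
Qed.
Lemma sqrt_ge (R : rcfType) (a x : R) : 0 <= a -> a ^+ 2 <= x -> a <= Num.sqrt x.
Proof.
move=> a0 h. have := ler_wsqrtr h. by rewrite sqrtr_sqr ger0_norm.
Qed.

Lemma arith1 (R : rcfType) (k D dm N : R) : 2 <= k -> 0 <= dm -> dm <= D ->
  (D = 0 \/ (1 <= D /\ 2 <= N)) ->
  2 * D <= (2 * D * k - 1 + Num.sqrt (4 * k ^+ 2 * D ^+ 2 * N ^+ 2 - 2 * dm * k + 1)) / (2 * k).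
Proof.
move=> hk hdm hdD hD.
rewrite ler_pdivlMr; last by lra.
have : 2 * D * k + 1 <= Num.sqrt (4 * k ^+ 2 * D ^+ 2 * N ^+ 2 - 2 * dm * k + 1).
  apply: sqrt_ge; first by case: hD => [->|[]]; nra.
  case: hD => [D0|[D1 N2]].
    have -> : dm = 0 by lra.
    by rewrite D0; lra.
  have hN : 4 <= N ^+ 2 by nra.
  have hkD : 2 <= k * D by nra.
  have : 12 * (k * D) ^+ 2 <= 4 * k ^+ 2 * D ^+ 2 * N ^+ 2.
    have : 0 <= (k * D) ^+ 2 by nra.
    rewrite exprMn. nra.
  nra.
lra.
Qed.

Lemma arith2 (R : rcfType) (k D dm N : R) : 2 <= k -> 0 <= dm -> dm <= D ->
  1 <= D -> 1 <= N ->
  1 + 1 / k <= (2 * D * k - 1 + Num.sqrt (4 * k ^+ 2 * D ^+ 2 * N ^+ 2 - 2 * dm * k + 1)) / (2 * k).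
Proof.
move=> hk hdm hdD hD hN.
rewrite ler_pdivlMr; last by lra.
have : 3 <= Num.sqrt (4 * k ^+ 2 * D ^+ 2 * N ^+ 2 - 2 * dm * k + 1).
  apply: sqrt_ge => //.
  have hkD : 2 <= k * D by nra.
  have : (k * D) ^+ 2 <= k ^+ 2 * D ^+ 2 * N ^+ 2.
    rewrite exprMn. have : 1 <= N ^+ 2 by nra.
    have : 0 <= k ^+ 2 * D ^+ 2 by nra. nra.
  have : dm * k <= k * D by nra.
  nra.
have -> : (1 + 1 / k) * (2 * k) = 2 * k + 2 by field; lra.
nra.
Qed.

Lemma gersh (R : rcfType) n m (E : {set {set 'I_n}}) (v : 'rV[R]_n) (lam : R) :
  (2 < m)%N -> uniform m E -> v *m hlaplacian R m E = lam *: v -> v != 0 ->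
  exists p, lam <= 2 * (hdeg E p)%:R.
Proof.
move=> hm hu hv v0.
have [j vj|] := pickP (fun j => v 0 j != 0); last first.
  move=> h; case/negP: v0; apply/eqP/rowP => j; rewrite !mxE.
  by have := h j => /= /negbFE /eqP.
have k0 : 0 < (m.-1)%:R :> R by rewrite ltr0n; case: (m) hm => [|[|]].
case: (@arg_maxP _ _ _ j xpredT (fun i => `|v 0 i|)) => // p _ hp.
exists p.
have vp0 : 0 < `|v 0 p| by apply: lt_le_trans (hp j isT); rewrite normr_gt0.
have := congr1 (fun M : 'rV[R]_n => M 0 p) hv; rewrite !mxE.
rewrite (bigD1 p) //= !mxE eqxx.
set S := (X in _ + X = _) => hS.
have hS' : `|S| <= `|v 0 p| * (hdeg E p)%:R.
  apply: le_trans (ler_norm_sum _ _ _) _.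
  apply: (@le_trans _ _ (\sum_(i | i != p) `|v 0 p| * ((hcodeg E i p)%:R / (m.-1)%:R))).
    apply: ler_sum => i /negbTE ip; rewrite !mxE ip normrM normrN.
    rewrite [`|_ / _|]ger0_norm ?divr_ge0 ?ler0n //.
    apply: ler_wpM2r; first by rewrite divr_ge0 ?ler0n.
    exact: hp.
  rewrite -big_distrr /= -mulr_suml -natr_sum (@codeg_sum' n m E p hu) natrM.
  rewrite mulrAC divff ?mul1r //; exact: lt0r_neq0.
have : `|lam - (hdeg E p)%:R| * `|v 0 p| <= `|v 0 p| * (hdeg E p)%:R.
  rewrite -normrM mulrBl -hS; by rewrite addrAC mulrC subrr add0r.
rewrite mulrC ler_pM2l //.
move=> h; have := ler_norm (lam - (hdeg E p)%:R); lra.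
Qed.

Lemma single (R : rcfType) n m (e : {set 'I_n}) (v : 'rV[R]_n) (lam : R) :
  (2 < m)%N -> #|e| = m -> v *m hlaplacian R m [set e] = lam *: v -> v != 0 ->
  lam <= 1 + 1 / (m.-1)%:R.
Proof.
move=> hm he hv v0.
have k0 : 0 < (m.-1)%:R :> R by rewrite ltr0n; case: (m) hm => [|[|]].
have kn0 : (m.-1)%:R != 0 :> R by exact: lt0r_neq0.
set k := (m.-1)%:R : R.
have hd i : hdeg [set e] i = (i \in e) :> nat.
  by rewrite /hdeg card_sum big_set1.
have hc i j : hcodeg [set e] i j = ((i \in e) && (j \in e)) :> nat.
  by rewrite /hcodeg card_sum big_set1.
set s := \sum_i v 0 i * (i \in e)%:R.
have col j : lam * v 0 j = (j \in e)%:R * (v 0 j * (1 + 1 / k) - s / k).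
  have := congr1 (fun M : 'rV[R]_n => M 0 j) hv; rewrite !mxE => <-.
  have Lij (i : 'I_n) : hlaplacian R m [set e] i j = (j \in e)%:R * ((i == j)%:R * (1 + 1 / k) - (i \in e)%:R / k).
    rewrite !mxE /hdeg /hcodeg !card_sum !big_set1.
    have [->|ij] := eqVneq i j; rewrite ?eqxx ?(negbTE ij).
      case ej: (j \in e); rewrite /k /nat_of_bool; (field; exact: kn0).
    case ej2: (j \in e); case ei: (i \in e); rewrite ?andbT ?andbF /k /nat_of_bool; (field; exact: kn0).
  under eq_bigr do rewrite Lij.
  have -> : \sum_i v 0 i * ((j \in e)%:R * ((i == j)%:R * (1 + 1 / k) - (i \in e)%:R / k))
     = (j \in e)%:R * ((\sum_i v 0 i * (i == j)%:R) * (1 + 1 / k) - s / k).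
    rewrite /s mulr_suml mulr_suml -sumrB mulr_sumr; apply: eq_bigr => i _; (field; exact: kn0).
  congr (_ * (_ * _ - _)).
  rewrite (bigD1 j) //= eqxx mulr1 big1 ?addr0 // => i /negbTE ->; by rewrite mulr0.
have hs : lam * s = 0.
  have -> : lam * s = \sum_i (i \in e)%:R * (v 0 i * (1 + 1 / k) - s / k).
    rewrite /s mulr_sumr; apply: eq_bigr => i _; rewrite mulrA col.
    by case: (i \in e); rewrite ?mul0r ?mulr0 ?mul1r ?mulr1.
  have hce : \sum_i (i \in e)%:R = m%:R :> R.
    rewrite -natr_sum -he -sum1_card [in RHS]big_mkcond /=.
    by congr (_%:R); apply: eq_bigr => i _; case: (i \in e).
  have -> : \sum_i (i \in e)%:R * (v 0 i * (1 + 1 / k) - s / k)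
      = s * (1 + 1 / k) - (\sum_i (i \in e)%:R :> R) * (s / k).
    rewrite {2 3}/s !mulr_suml -sumrB; apply: eq_bigr => i _; rewrite mulrC.
    (field; exact: kn0).
  rewrite hce.
  have m0 : (0 < m)%N by apply: leq_trans hm.
  have -> : m%:R = k + 1 :> R by rewrite /k -{1}(prednK m0) -natr1.
  (field; exact: kn0).
have [j vj|] := pickP (fun j => v 0 j != 0); last first.
  move=> h; case/negP: v0; apply/eqP/rowP => j; rewrite !mxE.
  by have := h j => /= /negbFE /eqP.
have k1 : 1 + 1 / k >= 0 by rewrite addr_ge0 ?divr_ge0 ?ler01 // ltW.
have [l0|l0] := eqVneq lam 0; first by rewrite l0.
have s0 : s = 0 by move/eqP: hs; rewrite mulf_eq0 (negbTE l0) => /eqP.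
have := col j; rewrite s0 mul0r subr0.
case: (j \in e); rewrite ?mul0r ?mul1r.
  by rewrite [v 0 j * _]mulrC => /(mulIf vj) ->.
by move/eqP; rewrite mulf_eq0 (negbTE l0) (negbTE vj).
Qed.

Lemma dmin_le n (E : {set {set 'I_n}}) : (dmin E <= dmax E)%N.
Proof.
rewrite /dmin; elim/big_ind: _ => //.
  by move=> x y hx hy; rewrite geq_min hx.
by move=> i _; rewrite /dmax (bigD1 i) //= leq_maxl.
Qed.

Theorem corollary6 (R : rcfType) (n m : nat) (E : {set {set 'I_n}}) :
  (2 < m)%N -> uniform m E -> hconnected E ->
  forall lambda : R, eigenvalue (hlaplacian R m E) lambda ->
  lambda <= ((2 * (dmax E) * m.-1)%:R - 1
             + Num.sqrt (4%:R * (m.-1)%:R ^+ 2 * (dmax E)%:R ^+ 2 * (#|E|)%:R ^+ 2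
                         - 2%:R * (dmin E)%:R * (m.-1)%:R + 1))
            / (2 * m.-1)%:R.
Proof.
move=> hm hu _ lam /eigenvalueP [v hv v0].
have hk : 2 <= (m.-1)%:R :> R by rewrite (ler_nat R 2); case: (m) hm => [|[|]].
have hdm := @dmin_le n E.
rewrite !natrM.
case: (#|E| =P 1%N) => [/eqP/cards1P [e eE] | hE1].
  subst E.
  have he : #|e| = m by apply: hu; rewrite inE.
  apply: le_trans (@single R n m e v lam hm he hv v0) _.
  rewrite cards1.
  apply: arith2 => //; rewrite ?ler0n ?ler_nat //.
  have e0 : (0 < #|e|)%N by rewrite he; apply: leq_trans hm.
  case/card_gt0P: e0 => i ie.
  rewrite (ler_nat R 1) /dmax (bigD1 i) //=; apply: leq_trans (leq_maxl _ _).
  by rewrite /hdeg card_gt0; apply/set0Pn; exists e; rewrite !inE eqxx.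
have [p hp] := @gersh R n m E v lam hm hu hv v0.
apply: le_trans hp _.
have hpD : (hdeg E p <= dmax E)%N by rewrite /dmax (bigD1 p) //= leq_maxl.
apply: (@le_trans _ _ (2 * (dmax E)%:R)).
  by rewrite ler_pM2l ?ler_nat.
apply: arith1 => //; rewrite ?ler0n ?ler_nat //.
have [D0|D1] := eqVneq (dmax E) 0%N; first by left; rewrite D0.
right; split; first by rewrite (ler_nat R 1); rewrite lt0n.

case: (posnP #|E|) => [/eqP|]; last by case: #|E| hE1 => [|[|]].
rewrite cards_eq0 => /eqP E0; case/eqP: D1.
by rewrite /dmax big1 // => i _; rewrite /hdeg E0; apply/eqP; rewrite cards_eq0; apply/eqP/setP => x; rewrite !inE.
Qed.
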